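(* Let $k$ be a commutative ring containing $1/2$ and let $A$ be a smooth commutative $k$-algebra such that the $A$-module $\mathrm{Der}_k(A)$ is free with a basis $\tau_1,\dots,\tau_n$ of pairwise commuting derivations; let $\omega_1,\dots,\omega_n$ be the dual basis of $\Omega^1_{A/k}$, so that $df=\sum_r\tau_r(f)\,\omega_r$ for $f\in A$. Let $g=(g^{ij})\in GL_n(A)$ be such that the derivations $\tau'_i=\sum_j g^{ij}\tau_j$ ($i=1,\dots,n$) pairwise commute, let $\omega'_1,\dots,\omega'_n$ be the basis of $\Omega^1_{A/k}$ dual to $(\tau'_i)$ (so $\omega'_i=\sum_p (g^{-1})^{pi}\omega_p$), and let $A=(A^{\alpha\beta})\in GL_m(A)$ be arbitrary. With summation over repeated indices, put $$g^{i\alpha\gamma}=g^{iq}\,\tau_q\big((A^{-1})^{\alpha\mu}\big)A^{\mu\gamma},\qquad h_E^{ij}=\tau_j\big(g^{i\nu\nu}\big)+\tfrac12\,g^{iq}\,\tau_j\big((A^{-1})^{\mu\beta}\big)A^{\beta\gamma}\,\tau_q\big((A^{-1})^{\gamma\nu}\big)A^{\nu\mu},$$ and for $1\le i,j\le n$ define the $1$-form $$B_{ij}=-\tfrac12\big\{g^{i\mu\nu}\,d g^{j\nu\mu}-g^{j\nu\mu}\,d g^{i\mu\nu}\big\}-g^{ip}\tau_p(h_E^{jq})\,\omega_q+g^{jp}\tau_p(h_E^{iq})\,\omega_q-h_E^{jp}\,dg^{ip}+h_E^{ip}\,dg^{jp}.$$ Then $$B_{ij}=-\tfrac12\,\mathrm{tr}\big\{A^{-1}\tau'_i(A)A^{-1}\tau'_j(A)A^{-1}\tau'_r(A)-A^{-1}\tau'_j(A)A^{-1}\tau'_i(A)A^{-1}\tau'_r(A)\big\}\,\omega'_r,$$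 where $\tau'_i(A)$ denotes the matrix obtained by applying $\tau'_i$ entrywise.
   Context: $(A^{-1})^{\alpha\beta}$ denotes the $(\alpha,\beta)$ entry of the inverse matrix, $(g^{-1})^{pi}$ the $(p,i)$ entry of $g^{-1}$; repeated indices are summed (e.g. $g^{i\nu\nu}=\sum_\nu g^{i\nu\nu}$). The algebra $A$ and the matrix $A$ are distinguished by context (the matrix always carries indices or appears inside traces/derivations as a matrix). *)

(* Defs.v *)
From HB Require Import structures.
From mathcomp Require Import all_boot all_order all_algebra.
Set Implicit Arguments. Unset Strict Implicit. Unset Printing Implicit Defensive.
Import GRing.Theory.
Local Open Scope ring_scope.

(* Conventions: the base ring k is a commutative ring with computable units,
   A is a commutative k-algebra, 1/2 in A is (2^-1)%:A where 2 is a unit of k.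
   1-forms live in an A-module M equipped with a k-derivation d : A -> M and
   a basis omega_1..omega_n with  d f = sum_r tau_r(f) omega_r. *)

Section Defs.
Variables (k : comUnitRingType) (A : comAlgType k).

Definition is_kder (D : A -> A) : Prop :=
  [/\ forall x y, D (x + y) = D x + D y,
      forall (c : k) x, D (c *: x) = c *: D x
    & forall x y, D (x * y) = x * D y + D x * y].

Definition is_kder_mod (M : lmodType A) (D : A -> M) : Prop :=
  [/\ forall x y, D (x + y) = D x + D y,
      forall (c : k) x, D (c *: x) = c%:A *: D x
    & forall x y, D (x * y) = x *: D y + y *: D x].

Definition half : A := ((2%:R : k)^-1)%:A.

Variables (n m : nat) (tau : 'I_n -> A -> A) (g : 'M[A]_n) (Am Ai : 'M[A]_m).

Definition tau' (i : 'I_n) (x : A) : A := \sum_(j < n) g i j * tau j x.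

Definition g3 (i : 'I_n) (a c : 'I_m) : A :=
  \sum_(q < n) \sum_(mu < m) g i q * tau q (Ai a mu) * Am mu c.

Definition hE (i j : 'I_n) : A :=
  \sum_(nu < m) tau j (g3 i nu nu)
  + half * \sum_(q < n) \sum_(mu < m) \sum_(be < m) \sum_(ga < m) \sum_(nu < m)
      (g i q * tau j (Ai mu be) * Am be ga * tau q (Ai ga nu) * Am nu mu).

Definition tauA' (i : 'I_n) : 'M[A]_m := \matrix_(a, b) tau' i (Am a b).

Variables (M : lmodType A) (d : A -> M) (omega : 'I_n -> M) (ginv : 'M[A]_n).

Definition omega' (i : 'I_n) : M := \sum_(p < n) ginv p i *: omega p.

Definition Bform (i j : 'I_n) : M :=
  - (half *: \sum_(mu < m) \sum_(nu < m)
        (g3 i mu nu *: d (g3 j nu mu) - g3 j nu mu *: d (g3 i mu nu)))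
  - \sum_(p < n) \sum_(q < n) (g i p * tau p (hE j q)) *: omega q
  + \sum_(p < n) \sum_(q < n) (g j p * tau p (hE i q)) *: omega q
  - \sum_(p < n) hE j p *: d (g i p)
  + \sum_(p < n) hE i p *: d (g j p).

Definition Bform_rhs (i j : 'I_n) : M :=
  - (half *: \sum_(r < n)
      \tr (Ai *m tauA' i *m Ai *m tauA' j *m Ai *m tauA' r
           - Ai *m tauA' j *m Ai *m tauA' i *m Ai *m tauA' r) *: omega' r).

End Defs.

(* Main.v *)
Require Import Defs.
From HB Require Import structures.
From mathcomp Require Import all_boot all_order all_algebra.
From mathcomp Require Import ring.
From Stdlib Require Import FunctionalExtensionality.
Import GRing.Theory.
Local Open Scope ring_scope.

Set Implicit Arguments. Unset Strict Implicit.

Section Der.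
Variables (k : comUnitRingType) (A : comAlgType k).
Variable D : A -> A.
Hypothesis HD : is_kder D.

Lemma derD x y : D (x + y) = D x + D y. Proof. by case: HD. Qed.
Lemma derM x y : D (x * y) = x * D y + D x * y. Proof. by case: HD. Qed.
Lemma derZ (c : k) x : D (c *: x) = c *: D x. Proof. by case: HD. Qed.
Lemma der0 : D 0 = 0.
Proof. by have := derD 0 0; rewrite addr0 -{1}[D 0]addr0 => /addrI <-. Qed.
Lemma derN x : D (- x) = - D x.
Proof. apply/eqP; rewrite -subr_eq0 opprK -derD addNr der0 //. Qed.
Lemma derB x y : D (x - y) = D x - D y. Proof. by rewrite derD derN. Qed.
Lemma der_sum (I : Type) (r : seq I) (P : pred I) (F : I -> A) :
  D (\sum_(i <- r | P i) F i) = \sum_(i <- r | P i) D (F i).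
Proof. exact: (big_morph D derD der0). Qed.
Lemma der1 : D 1 = 0.
Proof. by have := derM 1 1; rewrite !mul1r mulr1 -{1}[D 1]addr0 => /addrI <-. Qed.
Lemma derhalf x : D ((@Defs.half k A) * x) = (@Defs.half k A) * D x.
Proof. by rewrite /Defs.half -!scalerAl !mul1r derZ. Qed.
Lemma der_nat (b : bool) : D (b%:R) = 0.
Proof. by case: b; rewrite ?der0 ?der1. Qed.

Definition mD p q (X : 'M[A]_(p, q)) := map_mx D X.
Arguments mD {p q}.
Lemma mderD p q (X Y : 'M[A]_(p,q)) : mD (X + Y) = mD X + mD Y.
Proof. by apply/matrixP => a b; rewrite !mxE derD. Qed.
Lemma mderN p q (X : 'M[A]_(p,q)) : mD (- X) = - mD X.
Proof. by apply/matrixP => a b; rewrite !mxE derN. Qed.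
Lemma mderB p q (X Y : 'M[A]_(p,q)) : mD (X - Y) = mD X - mD Y.
Proof. by rewrite mderD mderN. Qed.
Lemma mder0 p q : mD (0 : 'M[A]_(p,q)) = 0.
Proof. by apply/matrixP => a b; rewrite !mxE der0. Qed.
Lemma mder_sum p q (I : Type) (r : seq I) (P : pred I) (F : I -> 'M[A]_(p,q)) :
  mD (\sum_(i <- r | P i) F i) = \sum_(i <- r | P i) mD (F i).
Proof. exact: (big_morph (@mD p q) (@mderD p q) (@mder0 p q)). Qed.
Lemma mderM p q s (X : 'M[A]_(p,q)) (Y : 'M[A]_(q,s)) :
  mD (X *m Y) = X *m mD Y + mD X *m Y.
Proof.
apply/matrixP => a b; rewrite !mxE der_sum -big_split /=.
by apply: eq_bigr => c _; rewrite derM !mxE.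
Qed.
Lemma mderZ p q a (X : 'M[A]_(p,q)) : mD (a *: X) = a *: mD X + D a *: X.
Proof. by apply/matrixP => b c; rewrite !mxE derM mulrC [D a * _]mulrC. Qed.
Lemma mder1 p : mD (1%:M : 'M[A]_p) = 0.
Proof. by apply/matrixP => a b; rewrite !mxE der_nat. Qed.
Lemma mder_tr p (X : 'M[A]_p) : \tr (mD X) = D (\tr X).
Proof. by rewrite /mxtrace der_sum; apply: eq_bigr => a _; rewrite mxE. Qed.
End Der.


Section Main.
Variables (k : comUnitRingType) (A : comAlgType k) (n m : nat) (tau : 'I_n -> A -> A).
Hypothesis tau_der : forall i, is_kder (tau i).
Hypothesis tau_comm : forall i j x, tau i (tau j x) = tau j (tau i x).
Hypothesis tau_free : forall a b : 'I_n -> A,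
      (forall x, \sum_(i < n) a i * tau i x = \sum_(i < n) b i * tau i x) ->
      a = b.
Variables (g ginv : 'M[A]_n).
Hypothesis g_inv_l : ginv *m g = 1%:M.
Hypothesis tau'_comm : forall i j x,
      tau' tau g i (tau' tau g j x) = tau' tau g j (tau' tau g i x).
Variables (Am Ai : 'M[A]_m).
Hypothesis A_inv_r : Am *m Ai = 1%:M.
Hypothesis A_inv_l : Ai *m Am = 1%:M.

Local Notation T' := (tau' tau g).

Lemma tau'_der i : is_kder (T' i).
Proof.
split.
- by move=> x y; rewrite /tau' -big_split; apply: eq_bigr => j _; rewrite derD // mulrDr.
- move=> c x; rewrite /tau' scaler_sumr; apply: eq_bigr => j _.
  by rewrite derZ // scalerAr.
- move=> x y; rewrite /tau' mulr_sumr mulr_suml -big_split; apply: eq_bigr => j _.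
  rewrite /= derM //; ring.
Qed.

Lemma Kcomm r i x :
  \sum_p tau r (g i p) * tau p x = tau r (T' i x) - T' i (tau r x).
Proof.
rewrite /tau' der_sum //.
apply/eqP; rewrite eq_sym subr_eq -big_split /=; apply/eqP; apply: eq_bigr => p _.
by rewrite derM // tau_comm addrC.
Qed.

Lemma expand2 i j x :
  T' i (T' j x) = \sum_q T' i (g j q) * tau q x
     + \sum_p \sum_q g i p * g j q * tau p (tau q x).
Proof.
rewrite {1}/tau'.
have -> : \sum_q T' i (g j q) * tau q x
   = \sum_p \sum_q g i p * tau p (g j q) * tau q x.
  rewrite exchange_big /=; apply: eq_bigr => q _.
  by rewrite /tau' mulr_suml.
rewrite -big_split /=; apply: eq_bigr => p _.
rewrite /tau' der_sum // mulr_sumr -big_split /=; apply: eq_bigr => q _.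
rewrite derM //; ring.
Qed.

Lemma Ccomm i j q : T' i (g j q) = T' j (g i q).
Proof.
suff /(congr1 (fun f => f q)) : (fun q0 => T' i (g j q0)) = (fun q0 => T' j (g i q0)) by [].
apply: tau_free => x.
apply: (@addIr _ (\sum_p \sum_q g i p * g j q * tau p (tau q x))).
rewrite -expand2.
have -> : \sum_p \sum_q g i p * g j q * tau p (tau q x)
        = \sum_p \sum_q g j p * g i q * tau p (tau q x).
  rewrite exchange_big /=; apply: eq_bigr => p _; apply: eq_bigr => q' _.
  rewrite /= tau_comm; ring.
by rewrite -expand2 tau'_comm.
Qed.


Definition X q := mD (tau q) Ai *m Am.
Definition G i := \sum_q g i q *: X q.

Lemma mtau' i p' q' (Y : 'M[A]_(p',q')) : mD (T' i) Y = \sum_p g i p *: mD (tau p) Y.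
Proof. by apply/matrixP => a b; rewrite !mxE summxE; apply: eq_bigr => p _; rewrite !mxE. Qed.

Lemma mcomm p q p' q' (Y : 'M[A]_(p',q')) : mD (tau p) (mD (tau q) Y) = mD (tau q) (mD (tau p) Y).
Proof. by apply/matrixP => a b; rewrite !mxE tau_comm. Qed.

Lemma tAm q : mD (tau q) Ai *m Am = - (Ai *m mD (tau q) Am).
Proof.
have := mderM (tau_der q) Ai Am; rewrite A_inv_l mder1 // => h.
by apply/eqP; rewrite -addr_eq0 addrC -h.
Qed.

Lemma tAm' q : Am *m mD (tau q) Ai = - (mD (tau q) Am *m Ai).
Proof.
have := mderM (tau_der q) Am Ai; rewrite A_inv_r mder1 // => h.
by apply/eqP; rewrite -addr_eq0 -h.
Qed.

Lemma XX p q : X p *m X q = - (mD (tau p) Ai *m mD (tau q) Am).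
Proof.
rewrite /X mulmxA -[mD (tau p) Ai *m Am *m _]mulmxA tAm' mulmxN mulNmx.
by rewrite mulmxA -[_ *m Ai *m Am]mulmxA A_inv_l mulmx1.
Qed.

Lemma F0 p q : mD (tau p) (X q) - mD (tau q) (X p) = X p *m X q - X q *m X p.
Proof.
rewrite /X !mderM // mcomm !XX opprK.

by rewrite opprD addrACA subrr addr0 addrC.
Qed.


Lemma GG i j : G i *m G j = \sum_p \sum_q (g i p * g j q) *: (X p *m X q).
Proof.
rewrite /G mulmx_suml; apply: eq_bigr => p _.
rewrite -scalemxAl mulmx_sumr scaler_sumr; apply: eq_bigr => q _.
by rewrite -scalemxAr scalerA.
Qed.

Lemma GGt i j : G j *m G i = \sum_p \sum_q (g i p * g j q) *: (X q *m X p).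
Proof.
rewrite GG exchange_big /=; apply: eq_bigr => p _; apply: eq_bigr => q _.
by rewrite mulrC.
Qed.

Lemma mT'G i j : mD (T' i) (G j) = \sum_q (T' i (g j q) *: X q)
   + \sum_p \sum_q (g i p * g j q) *: mD (tau p) (X q).
Proof.
rewrite /G mder_sum; last exact: tau'_der.
rewrite addrC exchange_big -big_split /=; apply: eq_bigr => q _.
rewrite mderZ; last exact: tau'_der.
congr (_ + _); rewrite mtau' scaler_sumr; apply: eq_bigr => p _.
by rewrite scalerA mulrC.
Qed.

Lemma F1 i j : mD (T' i) (G j) - mD (T' j) (G i) = G i *m G j - G j *m G i.
Proof.
rewrite !mT'G.
have -> : \sum_q (T' j (g i q) *: X q) = \sum_q (T' i (g j q) *: X q).
  by apply: eq_bigr => q _; rewrite Ccomm.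
rewrite opprD addrACA subrr add0r.
have -> : \sum_p \sum_q (g j p * g i q) *: mD (tau p) (X q)
   = \sum_p \sum_q (g i p * g j q) *: mD (tau q) (X p).
  rewrite exchange_big /=; apply: eq_bigr => p _; apply: eq_bigr => q _.
  by rewrite mulrC.
rewrite GG GGt -!sumrB; apply: eq_bigr => p _.
rewrite -!sumrB; apply: eq_bigr => q _.
by rewrite -!scalerBr F0.
Qed.


Lemma F0' p q : mD (tau p) (X q) = mD (tau q) (X p) + (X p *m X q - X q *m X p).
Proof. by rewrite -F0 addrC subrK. Qed.

Lemma F2 i r : mD (T' i) (X r) =
  mD (tau r) (G i) - \sum_p tau r (g i p) *: X p + (G i *m X r - X r *m G i).
Proof.
rewrite mtau' /G mder_sum //.
have -> : \sum_q mD (tau r) (g i q *: X q) =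
   \sum_q g i q *: mD (tau r) (X q) + \sum_q tau r (g i q) *: X q.
  by rewrite -big_split; apply: eq_bigr => q _; rewrite mderZ.
rewrite addrK mulmx_suml mulmx_sumr -sumrB -big_split /=.
apply: eq_bigr => p _.
by rewrite -scalemxAl -scalemxAr -scalerBr -scalerDr F0'.
Qed.


Definition t i := \tr (G i).
Definition Q i j := \tr (X j *m G i).

Lemma tsym i j : T' i (t j) = T' j (t i).
Proof.
apply/eqP; rewrite -subr_eq0 /t -(mder_tr (tau'_der i)) -(mder_tr (tau'_der j)).
by rewrite -raddfB F1 raddfB /= mxtrace_mulC subrr.
Qed.

Lemma ell_part r i j :
  - T' i (tau r (t j)) + T' j (tau r (t i))
  - \sum_p tau p (t j) * tau r (g i p) + \sum_p tau p (t i) * tau r (g j p) = 0.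
Proof.
have K : forall i j, \sum_p tau p (t j) * tau r (g i p) = tau r (T' i (t j)) - T' i (tau r (t j)).
  by move=> i' j'; rewrite -Kcomm; apply: eq_bigr => p _; rewrite mulrC.
rewrite !K (tsym i j); ring.
Qed.

Lemma Zl r i j : T' i (Q j r) + \sum_p Q j p * tau r (g i p) =
  \tr (X r *m mD (T' i) (G j)) + \tr (mD (tau r) (G i) *m G j)
  + \tr (X r *m (G j *m G i)) - \tr (X r *m (G i *m G j)).
Proof.
rewrite /Q -mder_tr; last exact: tau'_der.
rewrite mderM; last exact: tau'_der.
rewrite F2 raddfD /= !mulmxDl !mulNmx !raddfD !raddfN /=.
have -> : \tr ((\sum_p tau r (g i p) *: X p) *m G j) = \sum_p Q j p * tau r (g i p).
  rewrite (mulmx_suml (G j)) raddf_sum /=.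
  by apply: eq_bigr => p _; rewrite -scalemxAl mxtraceZ mulrC.
have -> : \tr (G i *m X r *m G j) = \tr (X r *m (G j *m G i)).
  by rewrite (mxtrace_mulC (G i *m X r) (G j)) [G j *m (G i *m X r)]mulmxA (mxtrace_mulC (G j *m G i) (X r)).
rewrite -[X r *m G i *m G j]mulmxA /=.
ring.
Qed.


Lemma Qpart r i j : \tr (G i *m mD (tau r) (G j)) - \tr (G j *m mD (tau r) (G i))
  + (T' i (Q j r) + \sum_p Q j p * tau r (g i p))
  - (T' j (Q i r) + \sum_p Q i p * tau r (g j p))
  = \tr (X r *m (G j *m G i)) - \tr (X r *m (G i *m G j)).
Proof.
rewrite !Zl.
have E : mD (T' i) (G j) = mD (T' j) (G i) + (G i *m G j - G j *m G i).
  by rewrite -F1 addrC subrK.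
rewrite E mulmxDr raddfD /= mulmxBr raddfB /=.
rewrite (mxtrace_mulC (mD (tau r) (G i)) (G j)) (mxtrace_mulC (mD (tau r) (G j)) (G i)).
ring.
Qed.

Lemma tauA'E i : tauA' tau g Am i = mD (T' i) Am.
Proof. by apply/matrixP => a b; rewrite !mxE. Qed.

Lemma YG i : Ai *m mD (T' i) Am = - G i.
Proof.
rewrite mtau' mulmx_sumr /G -sumrN; apply: eq_bigr => q _.
by rewrite /X tAm -scalemxAr scalerN opprK.
Qed.

Lemma sumG r : \sum_s ginv r s *: G s = X r.
Proof.
rewrite /G.
have -> : \sum_s ginv r s *: (\sum_q g s q *: X q) = \sum_q (ginv *m g) r q *: X q.
  under eq_bigr => s _ do rewrite scaler_sumr.
  rewrite exchange_big /=; apply: eq_bigr => q _.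
  rewrite mxE scaler_suml; apply: eq_bigr => s _.
  by rewrite scalerA.
rewrite g_inv_l (bigD1 r) //= mxE eqxx scale1r big1 ?addr0 // => q /negbTE.
by rewrite mxE eq_sym => ->; rewrite scale0r.
Qed.

Lemma Tside r i j :
  \sum_s ginv r s * \tr (Ai *m tauA' tau g Am i *m Ai *m tauA' tau g Am j *m Ai *m tauA' tau g Am s
           - Ai *m tauA' tau g Am j *m Ai *m tauA' tau g Am i *m Ai *m tauA' tau g Am s)
  = \tr (X r *m (G j *m G i)) - \tr (X r *m (G i *m G j)).
Proof.
have P3 : forall P1 P2 P3 : 'M[A]_m,
   Ai *m P1 *m Ai *m P2 *m Ai *m P3 = (Ai *m P1) *m (Ai *m P2) *m (Ai *m P3).
  by move=> P1 P2 P3; rewrite !mulmxA.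
under eq_bigr => s _ do rewrite !P3 !tauA'E !YG !mulNmx !mulmxN !opprK -mulmxBl -linearZ /=.
rewrite -raddf_sum /=.
under eq_bigr => s _ do rewrite scalemxAr.
rewrite -mulmx_sumr sumG mxtrace_mulC mulmxBr !mulmxN opprK raddfD raddfN /= addrC.
by [].
Qed.


Lemma g3E i a c : g3 tau g Am Ai i a c = G i a c.
Proof.
rewrite /g3 /G summxE; apply: eq_bigr => q _.
rewrite !mxE mulr_sumr; apply: eq_bigr => mu _.
by rewrite !mxE mulrA.
Qed.

Lemma hE_E i j : hE tau g Am Ai i j = tau j (t i) + @Defs.half k A * Q i j.
Proof.
rewrite /hE /t /Q; congr (_ + _ * _).
  rewrite /mxtrace der_sum //; apply: eq_bigr => nu _; by rewrite g3E.
rewrite /mxtrace exchange_big /=; apply: eq_bigr => mu _.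
rewrite mxE.
under [RHS]eq_bigr => ga _ do rewrite !mxE mulr_suml.
rewrite [RHS]exchange_big [LHS]exchange_big /=; apply: eq_bigr => be _.
rewrite [LHS]exchange_big /=; apply: eq_bigr => ga _.
rewrite mxE summxE mulr_sumr; apply: eq_bigr => q _.
rewrite !mxE mulr_sumr mulr_sumr; apply: eq_bigr => nu _.
rewrite !mxE; ring.
Qed.


Lemma ell_part' r i j : T' i (tau r (t j)) =
  T' j (tau r (t i)) - \sum_p tau p (t j) * tau r (g i p) + \sum_p tau p (t i) * tau r (g j p).
Proof. apply/eqP; rewrite -subr_eq0 -oppr_eq0; apply/eqP; rewrite -[in RHS](ell_part r i j); ring. Qed.

Lemma Qpart' r i j : \tr (G i *m mD (tau r) (G j)) =
  \sum_s ginv r s * \tr (Ai *m tauA' tau g Am i *m Ai *m tauA' tau g Am j *m Ai *m tauA' tau g Am s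
           - Ai *m tauA' tau g Am j *m Ai *m tauA' tau g Am i *m Ai *m tauA' tau g Am s)
  + \tr (G j *m mD (tau r) (G i))
  - (T' i (Q j r) + \sum_p Q j p * tau r (g i p))
  + (T' j (Q i r) + \sum_p Q i p * tau r (g j p)).
Proof. rewrite Tside -(Qpart r i j); ring. Qed.

Lemma S1E r i j :
  \sum_mu \sum_nu (G i mu nu * tau r (G j nu mu) - G j nu mu * tau r (G i mu nu))
  = \tr (G i *m mD (tau r) (G j)) - \tr (G j *m mD (tau r) (G i)).
Proof.
rewrite /mxtrace.
have -> : \sum_mu (G i *m mD (tau r) (G j)) mu mu = \sum_mu \sum_nu G i mu nu * tau r (G j nu mu).
  by apply: eq_bigr => mu _; rewrite mxE; apply: eq_bigr => nu _; rewrite mxE.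
have -> : \sum_mu (G j *m mD (tau r) (G i)) mu mu = \sum_mu \sum_nu G j nu mu * tau r (G i mu nu).
  rewrite exchange_big /=; apply: eq_bigr => nu _; rewrite mxE; apply: eq_bigr => mu _.
  by rewrite mxE.
by rewrite -sumrB; apply: eq_bigr => mu _; rewrite sumrB.
Qed.

End Main.


Section PsiS.
Variables (k : comUnitRingType) (A : comAlgType k) (n : nat) (M : lmodType A) (omega : 'I_n -> M).
Definition Psi (c : 'I_n -> A) : M := \sum_r c r *: omega r.
Lemma PsiE c : \sum_r c r *: omega r = Psi c. Proof. by []. Qed.
Lemma PsiD c1 c2 : Psi c1 + Psi c2 = Psi (fun r => c1 r + c2 r).
Proof. by rewrite /Psi -big_split; apply: eq_bigr => r _; rewrite scalerDl. Qed.
Lemma PsiN c : - Psi c = Psi (fun r => - c r).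
Proof. by rewrite /Psi -sumrN; apply: eq_bigr => r _; rewrite scaleNr. Qed.
Lemma PsiB c1 c2 : Psi c1 - Psi c2 = Psi (fun r => c1 r - c2 r).
Proof. by rewrite PsiN PsiD. Qed.
Lemma PsiZ a c : a *: Psi c = Psi (fun r => a * c r).
Proof. by rewrite /Psi scaler_sumr; apply: eq_bigr => r _; rewrite scalerA. Qed.
Lemma Psi_sum (I : finType) (c : I -> 'I_n -> A) :
  \sum_x Psi (c x) = Psi (fun r => \sum_x c x r).
Proof.
rewrite /Psi exchange_big /=; apply: eq_bigr => r _.
by rewrite scaler_suml.
Qed.
End PsiS.

Unset Implicit Arguments. Set Strict Implicit.

Theorem mainTheorem1
  (k : comUnitRingType) (A : comAlgType k)
  (two_unit : (2%:R : k) \is a GRing.unit)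
  (n m : nat) (tau : 'I_n -> A -> A)
  (tau_der : forall i, is_kder (tau i))
  (tau_comm : forall i j x, tau i (tau j x) = tau j (tau i x))
  (tau_span : forall D : A -> A, is_kder D ->
      exists a : 'I_n -> A, forall x, D x = \sum_(i < n) a i * tau i x)
  (tau_free : forall a b : 'I_n -> A,
      (forall x, \sum_(i < n) a i * tau i x = \sum_(i < n) b i * tau i x) ->
      a = b)
  (M : lmodType A) (d : A -> M) (omega : 'I_n -> M)
  (d_der : is_kder_mod d)
  (omega_span : forall v : M, exists a : 'I_n -> A, v = \sum_(r < n) a r *: omega r)
  (omega_free : forall a b : 'I_n -> A,
      \sum_(r < n) a r *: omega r = \sum_(r < n) b r *: omega r -> a = b)
  (d_omega : forall f : A, d f = \sum_(r < n) tau r f *: omega r)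
  (g ginv : 'M[A]_n) (g_inv_r : g *m ginv = 1%:M) (g_inv_l : ginv *m g = 1%:M)
  (tau'_comm : forall i j x,
      tau' tau g i (tau' tau g j x) = tau' tau g j (tau' tau g i x))
  (Am Ai : 'M[A]_m) (A_inv_r : Am *m Ai = 1%:M) (A_inv_l : Ai *m Am = 1%:M)
  (i j : 'I_n) :
  Bform tau g Am Ai d omega i j = Bform_rhs tau g Am Ai omega ginv i j.
Proof.
have dF : d = (fun f => Psi omega (fun r => tau r f)).
  by apply: functional_extensionality => f; rewrite d_omega.
have g3F : g3 tau g Am Ai = fun i a c => G tau g Am Ai i a c.
  by do 3 (apply: functional_extensionality => ?); rewrite (g3E tau g Am Ai).
rewrite /Bform /Bform_rhs /omega' dF g3F /=.
under eq_bigr => mu _ do under eq_bigr => nu _ do rewrite !PsiZ PsiB.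
under eq_bigr => mu _ do rewrite Psi_sum.
rewrite Psi_sum PsiZ PsiN.
under eq_bigr => p _ do rewrite PsiE.
under [X in _ + X - _]eq_bigr => p _ do rewrite PsiE.
rewrite !Psi_sum PsiB PsiD.
under eq_bigr => p _ do rewrite PsiZ.
under [X in _ + X]eq_bigr => p _ do rewrite PsiZ.
rewrite !Psi_sum PsiB PsiD.
under eq_bigr => r _ do rewrite PsiE PsiZ.
rewrite Psi_sum PsiZ PsiN.
congr Psi; apply: functional_extensionality => r /=.
rewrite (S1E tau g Am Ai r i j).
have hEF : hE tau g Am Ai = fun i j => tau j (t tau g Am Ai i) + @Defs.half k A * Q tau g Am Ai i j.
  by do 2 (apply: functional_extensionality => ?); rewrite (hE_E tau_der).
rewrite hEF /=.
have T'E : forall i x, \sum_p g i p * tau p x = tau' tau g i x by [].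
have sumsplit : forall (F1 F2 H : 'I_n -> A) h,
   \sum_x (F1 x + h * F2 x) * H x = \sum_x F1 x * H x + h * \sum_x F2 x * H x.
  move=> F1 F2 H h; rewrite mulr_sumr -big_split /=; apply: eq_bigr => x _; ring.
rewrite !T'E !sumsplit !(derD (tau'_der tau_der g i)) !(derD (tau'_der tau_der g j)).
rewrite !(derhalf (tau'_der tau_der g i)) !(derhalf (tau'_der tau_der g j)).
under [in RHS]eq_bigr => s _ do rewrite mulrC.
rewrite (ell_part' tau_der tau_comm tau_free tau'_comm A_inv_r A_inv_l).
rewrite (Qpart' tau_der tau_comm tau_free g_inv_l tau'_comm A_inv_r A_inv_l).
ring.
Qed.
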